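(* Assume the common support, overlap and unconfoundedness assumptions. Then for all $x\in\mathcal X$, $\theta_{\mathrm{AR}}(x)=r(x,p_0)\,\Gamma_{\mathrm{AR}}(x,p)$, where $p=p_0$ under Design 1 and $p=0$ under Design 2.
   Context: Population variables: $Y^*\in\{0,1\}$ (outcome), $T^*\in\{0,1\}$ (treatment), $X^*$ (covariate vector). Potential outcomes $Y^*(1),Y^*(0)\in\{0,1\}$ satisfy $Y^*=T^*Y^*(1)+(1-T^* )Y^*(0)$. Let $p_0:=\Pr(Y^*=1)$. The observed vector $(Y,T,X)$ arises from Bernoulli sampling: $Y\in\{0,1\}$ is drawn with known probability $h_0:=\Pr(Y=1)\in(0,1)$, and given $Y=y$, $(T,X)$ is drawn from a distribution $\mathcal P_y$. Densities (or mass functions) are denoted by $f$. Design 1 (case-control): for all $t\in\{0,1\}$, $x\in\mathcal X$, $y\in\{0,1\}$, $f_{X|Y}(x\mid y)=f_{X^*|Y^*}(x\mid y)$ and $\Pr(T=t\mid X=x,Y=y)=\Pr(T^*=t\mid X^*=x,Y^*=y)$. Design 2 (case-population): for all $t,x$, $f_{X|Y}(x\mid 0)=f_{X^*}(x)$, $\Pr(T=t\mid X=x,Y=0)=\Pr(T^*=t\mid X^*=x)$, $f_{X|Y}(x\mid 1)=f_{X^*|Y^*}(x\mid 1)$, $\Pr(T=t\mid X=x,Y=1)=\Pr(T^*=t\mid X^*=x,Y^*=1)$. Common support assumption: the support of $X^*$ and that of $X$ given $Y=y$ for $y=0,1$ coincide; call it $\mathcal X$. Let $\Pi(t\mid y,x):=\Pr(T=t\mid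 Y=y,X=x)$, assumed nonzero for all $t,y$. For $p\in[0,1]$, under Design 1, $r(x,p):=\frac{p(1-h_0)\Pr(Y=1\mid X=x)}{p(1-h_0)\Pr(Y=1\mid X=x)+h_0(1-p)\Pr(Y=0\mid X=x)}$, and under Design 2, $r(x,p):=\frac{p(1-h_0)}{h_0}\frac{\Pr(Y=1\mid X=x)}{\Pr(Y=0\mid X=x)}$. Define $\Gamma_{\mathrm{AR}}(x,p):=\frac{\Pi(1\mid 1,x)}{\Pi(1\mid 0,x)+r(x,p)\{\Pi(1\mid 1,x)-\Pi(1\mid 0,x)\}}-\frac{\Pi(0\mid 1,x)}{\Pi(0\mid 0,x)+r(x,p)\{\Pi(0\mid 1,x)-\Pi(0\mid 0,x)\}}$. Causal attributable risk: $\theta_{\mathrm{AR}}(x):=\Pr\{Y^*(1)=1\mid X^*=x\}-\Pr\{Y^*(0)=1\mid X^*=x\}$. Overlap: for all $(t,x)\in\{0,1\}\times\mathcal X$, $0<\Pr\{Y^*(t)=1\mid X^*=x\}<1$ and $0<\Pr(T^*=1\mid X^*=x)<1$. Unconfoundedness: for all $t,x$, $\Pr\{Y^*(t)=1\mid T^*=1,X^*=x\}=\Pr\{Y^*(t)=1\mid T^*=0,X^*=x\}$. *)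

(* Defs.v *)
From HB Require Import structures.
From mathcomp Require Import all_boot all_order all_algebra.
From mathcomp Require Import all_classical all_reals all_analysis.
Set Implicit Arguments. Unset Strict Implicit. Unset Printing Implicit Defensive.
Import Order.TTheory GRing.Theory Num.Theory.
Local Open Scope ring_scope.

(* Covariate space: a measurable space T with a reference measure mu
   (counting measure for mass functions, Lebesgue measure for densities, ...).

   POPULATION: the law of (X_star, T_star, Y_star(1), Y_star(0)) is given by
     - a density f of X_star w.r.t. mu, and
     - the conditional pmf q x t a b = Pr(T_star = t, Y_star(1) = a, Y_star(0) = b | X_star = x). *)

Definition Ystar (t a b : bool) : bool := if t then a else b.

Section Population.
Variables (R : realType) (d : measure_display) (T : measurableType d).
Variable mu : {measure set T -> \bar R}.
Variable f : T -> R.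
Variable q : T -> bool -> bool -> bool -> R.

Definition pop_pr (P : bool -> bool -> bool -> bool) (x : T) : R :=
  \sum_(t : bool) \sum_(a : bool) \sum_(b : bool) (if P t a b then q x t a b else 0).

Definition prY_X (y : bool) (x : T) : R := pop_pr (fun t a b => Ystar t a b == y) x.
Definition prT_X (s : bool) (x : T) : R := pop_pr (fun t _ _ => t == s) x.
Definition prYpot_X (s : bool) (x : T) : R := pop_pr (fun _ a b => if s then a else b) x.
Definition prYpot_TX (s u : bool) (x : T) : R :=
  pop_pr (fun t a b => (t == u) && (if s then a else b)) x / prT_X u x.
Definition prT_XY (s y : bool) (x : T) : R :=
  pop_pr (fun t a b => (t == s) && (Ystar t a b == y)) x / prY_X y x.

Definition p0 : R := fine (\int[mu]_x (f x * prY_X true x)%:E)%E.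
Definition prY (y : bool) : R := if y then p0 else 1 - p0.
Definition fX_Y (y : bool) (x : T) : R := f x * prY_X y x / prY y.

Definition theta_AR (x : T) : R := prYpot_X true x - prYpot_X false x.

Definition pop_model : Prop :=
  measurable_fun setT f /\ (forall x, 0 <= f x) /\
  (\int[mu]_x (f x)%:E = 1)%E /\
  (forall t a b, measurable_fun setT (fun x => q x t a b)) /\
  (forall x t a b, 0 <= q x t a b) /\
  (forall x, \sum_(t : bool) \sum_(a : bool) \sum_(b : bool) q x t a b = 1).

Definition supp : set T := [set x | 0 < f x].

Definition overlap : Prop :=
  forall x, supp x ->
    (forall s, 0 < prYpot_X s x < 1) /\ 0 < prT_X true x < 1.

Definition unconfounded : Prop :=
  forall x, supp x -> forall s, prYpot_TX s true x = prYpot_TX s false x.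

End Population.

(* OBSERVED data (Y, T, X): Y ~ Bernoulli(h0); given Y = y, X has density
   fo y (w.r.t. mu) and Pr(T = t | Y = y, X = x) = Pi t y x. *)
Section Observed.
Variables (R : realType) (T : Type).
Variables (h0 : R) (fo : bool -> T -> R) (Pi : bool -> bool -> T -> R).

(* Pr(Y = y | X = x), by Bayes' rule *)
Definition obs_prY_X (y : bool) (x : T) : R :=
  (if y then h0 else 1 - h0) * fo y x / (h0 * fo true x + (1 - h0) * fo false x).

Inductive design := Design1 | Design2.

Definition r_fun (D : design) (x : T) (p : R) : R :=
  match D with
  | Design1 => p * (1 - h0) * obs_prY_X true x /
               (p * (1 - h0) * obs_prY_X true x + h0 * (1 - p) * obs_prY_X false x)
  | Design2 => p * (1 - h0) / h0 * (obs_prY_X true x / obs_prY_X false x)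
  end.

Definition Gamma_AR (D : design) (x : T) (p : R) : R :=
  Pi true true x / (Pi true false x + r_fun D x p * (Pi true true x - Pi true false x))
  - Pi false true x / (Pi false false x + r_fun D x p * (Pi false true x - Pi false false x)).

End Observed.

Definition design_holds (R : realType) (d : measure_display) (T : measurableType d)
  (mu : {measure set T -> \bar R}) (f : T -> R) (q : T -> bool -> bool -> bool -> R)
  (D : design) (fo : bool -> T -> R) (Pi : bool -> bool -> T -> R) : Prop :=
  match D with
  | Design1 => forall x, supp f x -> forall t y,
       fo y x = fX_Y mu f q y x /\ Pi t y x = prT_XY q t y x
  | Design2 => forall x, supp f x -> forall t,
       [/\ fo false x = f x, Pi t false x = prT_X q t x,
           fo true x = fX_Y mu f q true x & Pi t true x = prT_XY q t true x]
  end.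

Definition common_support (R : realType) (T : Type) (f : T -> R) (fo : bool -> T -> R) : Prop :=
  forall x y, 0 < f x <-> 0 < fo y x.

(* Main.v *)
Require Import Defs.
From HB Require Import structures.
From mathcomp Require Import all_boot all_order all_algebra.
From mathcomp Require Import all_classical all_reals all_analysis.
From mathcomp Require Import ring lra.
Import Order.TTheory GRing.Theory Num.Theory.
Local Open Scope ring_scope.

Section S.
Variables (R : realType) (d : measure_display) (T : measurableType d) (q : T -> bool -> bool -> bool -> R) (x : T).
Local Notation Q := (q x).
Lemma e_prY1 : prY_X q true x = Q true true true + Q true true false + Q false true true + Q false false true.
Proof. rewrite /prY_X /pop_pr !big_bool /=. ring. Qed.
Lemma e_prY0 : prY_X q false x = Q true false true + Q true false false + Q false true false + Q false false false.
Proof. rewrite /prY_X /pop_pr !big_bool /=. ring. Qed.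
Lemma e_prT1 : prT_X q true x = Q true true true + Q true true false + Q true false true + Q true false false.
Proof. rewrite /prT_X /pop_pr !big_bool /=. ring. Qed.
Lemma e_prT0 : prT_X q false x = Q false true true + Q false true false + Q false false true + Q false false false.
Proof. rewrite /prT_X /pop_pr !big_bool /=. ring. Qed.
Lemma e_pot1 : prYpot_X q true x = Q true true true + Q true true false + Q false true true + Q false true false.
Proof. rewrite /prYpot_X /pop_pr !big_bool /=. ring. Qed.
Lemma e_pot0 : prYpot_X q false x = Q true true true + Q true false true + Q false true true + Q false false true.
Proof. rewrite /prYpot_X /pop_pr !big_bool /=. ring. Qed.
Lemma e_potT11 : prYpot_TX q true true x = (Q true true true + Q true true false) / prT_X q true x.
Proof. rewrite /prYpot_TX /pop_pr !big_bool /=. congr (_ / _). ring. Qed.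
Lemma e_potT10 : prYpot_TX q true false x = (Q false true true + Q false true false) / prT_X q false x.
Proof. rewrite /prYpot_TX /pop_pr !big_bool /=. congr (_ / _). ring. Qed.
Lemma e_potT01 : prYpot_TX q false true x = (Q true true true + Q true false true) / prT_X q true x.
Proof. rewrite /prYpot_TX /pop_pr !big_bool /=. congr (_ / _). ring. Qed.
Lemma e_potT00 : prYpot_TX q false false x = (Q false true true + Q false false true) / prT_X q false x.
Proof. rewrite /prYpot_TX /pop_pr !big_bool /=. congr (_ / _). ring. Qed.
Lemma e_TY11 : prT_XY q true true x = (Q true true true + Q true true false) / prY_X q true x.
Proof. rewrite /prT_XY /pop_pr !big_bool /=. congr (_ / _). ring. Qed.
Lemma e_TY01 : prT_XY q false true x = (Q false true true + Q false false true) / prY_X q true x.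
Proof. rewrite /prT_XY /pop_pr !big_bool /=. congr (_ / _). ring. Qed.
Lemma e_TY10 : prT_XY q true false x = (Q true false true + Q true false false) / prY_X q false x.
Proof. rewrite /prT_XY /pop_pr !big_bool /=. congr (_ / _). ring. Qed.
Lemma e_TY00 : prT_XY q false false x = (Q false true false + Q false false false) / prY_X q false x.
Proof. rewrite /prT_XY /pop_pr !big_bool /=. congr (_ / _). ring. Qed.
End S.

Ltac nz := repeat (apply/andP; split); try done.

Lemma div_ne0 {R : realType} {a b : R} : 0 < a / b -> b != 0.
Proof. apply: contraTneq => ->; by rewrite invr0 mulr0 ltxx. Qed.
Lemma div_ne0l {R : realType} {a b : R} : 0 < a / b -> a != 0.
Proof. apply: contraTneq => ->; by rewrite mul0r ltxx. Qed.

Theorem theorem5 (R : realType) (d : measure_display) (T : measurableType d)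
  (mu : {measure set T -> \bar R}) (f : T -> R) (q : T -> bool -> bool -> bool -> R)
  (h0 : R) (fo : bool -> T -> R) (Pi : bool -> bool -> T -> R) (D : design) :
  pop_model mu f q ->
  0 < h0 < 1 ->
  design_holds mu f q D fo Pi ->
  (forall t y x, supp f x -> Pi t y x != 0) ->
  common_support f fo ->
  overlap f q ->
  unconfounded f q ->
  forall x, supp f x ->
    theta_AR q x =
    r_fun h0 fo D x (p0 mu f q) *
    Gamma_AR h0 fo Pi D x (match D with Design1 => p0 mu f q | Design2 => 0 end).
Proof.
move=> [_ [_ [_ [_ [qge0 qsum]]]]] /andP[h0p h01] Hdes HPi Hcs Hov Hun x Hx.
have Hs : q x true true true + q x true true false + q x true false true + q x true false false + q x false true true + q x false true false + q x false false true + q x false false false = 1.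
  rewrite -(qsum x) !big_bool /=; ring.
have [_ /andP[e1p e1l]] := Hov x Hx.
have U1 := Hun x Hx true; have U0 := Hun x Hx false.
rewrite e_potT11 e_potT10 in U1; rewrite e_potT01 e_potT00 in U0.
have Hm : prY_X q false x = 1 - prY_X q true x.
  rewrite e_prY0 e_prY1; lra.
have He : prT_X q false x = 1 - prT_X q true x.
  rewrite e_prT0 e_prT1; lra.
have fp : 0 < f x := Hx.
have fo1p : 0 < fo true x by apply/(Hcs x true).
have fo0p : 0 < fo false x by apply/(Hcs x false).
rewrite He in U1 U0.
set e1 := prT_X q true x in e1p e1l U1 U0 He *.
set m1 := prY_X q true x in Hm *.
set p := p0 mu f q.
set a := q x true true true + q x true true false in U1 *.
set c := q x false true true + q x false false true in U0 *.
have e0n : 1 - e1 != 0 by rewrite subr_eq0 eq_sym lt_eqF.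
have e1n : e1 != 0 by rewrite gt_eqF.
have Htheta : theta_AR q x = a / e1 - c / (1 - e1).
  rewrite /theta_AR e_pot1 e_pot0.
  have Hb : q x false true true + q x false true false = a / e1 * (1 - e1) by rewrite U1; field.
  have Hc : q x true true true + q x true false true = c / (1 - e1) * e1 by rewrite -U0; field.
  transitivity (a + (q x false true true + q x false true false) - ((q x true true true + q x true false true) + c)).
    rewrite /a /c; ring.
  rewrite Hb Hc; field; nz.
rewrite Htheta.
have h0n : h0 != 0 by rewrite gt_eqF.
have h1n : 1 - h0 != 0 by rewrite subr_eq0 eq_sym lt_eqF.
have fn : f x != 0 by rewrite gt_eqF.
case: D Hdes => Hdes.
- have [Hf1 HP11] := Hdes x Hx true true.
  have [Hf0 HP10] := Hdes x Hx true false.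
  have [_ HP01] := Hdes x Hx false true.
  have [_ HP00] := Hdes x Hx false false.
  move: fo1p fo0p; rewrite Hf1 Hf0 /fX_Y /prY -/p0 -/p -/m1 Hm => fo1p fo0p.
  have pn := div_ne0 fo1p. have p1n := div_ne0 fo0p.
  have m1n : m1 != 0 by move: (div_ne0l fo1p); rewrite mulf_eq0 negb_or => /andP[].
  have m0n : 1 - m1 != 0 by move: (div_ne0l fo0p); rewrite mulf_eq0 negb_or => /andP[].
  have Hr : r_fun h0 fo Design1 x p = m1.
    rewrite /r_fun /obs_prY_X /= Hf1 Hf0 /fX_Y /prY -/p0 -/p Hm.
    set den := (h0 * _ + _).
    have denp : 0 < den by rewrite /den; apply: addr_gt0; apply: mulr_gt0 => //; lra.
    have denn : den != 0 by rewrite gt_eqF.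
    set K := h0 * (1 - h0) * f x / den.
    have Kn : K != 0 by rewrite /K !mulf_neq0 // invr_eq0.
    have -> : p * (1 - h0) * (h0 * (f x * m1 / p) / den) = K * m1  by rewrite /K; field; nz.
    have -> : h0 * (1 - p) * ((1 - h0) * (f x * (1 - m1) / (1 - p)) / den) = K * (1 - m1)
      by rewrite /K; field; nz.
    rewrite -mulrDr addrC subrK mulr1; field; nz.
  rewrite Hr /Gamma_AR Hr HP11 HP10 HP01 HP00 e_TY11 e_TY10 e_TY01 e_TY00 -/m1 Hm.
  rewrite -/a -/c.
  have -> : (q x true false true + q x true false false) / (1 - m1) +
       m1 * (a / m1 - (q x true false true + q x true false false) / (1 - m1)) = e1.
    rewrite /e1 e_prT1 /a; field; nz.
  have -> : (q x false true false + q x false false false) / (1 - m1) +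
       m1 * (c / m1 - (q x false true false + q x false false false) / (1 - m1)) = 1 - e1.
    transitivity (q x false true false + q x false false false + c); first by field; nz.
    rewrite /e1 e_prT1 /c; lra.
  field; nz.
- have [Hf0 HP10 Hf1 HP11] := Hdes x Hx true.
  have [_ HP00 _ HP01] := Hdes x Hx false.
  move: fo1p fo0p; rewrite Hf1 Hf0 /fX_Y /prY -/p0 -/p -/m1 => fo1p fo0p.
  have pn := div_ne0 fo1p.
  have m1n : m1 != 0 by move: (div_ne0l fo1p); rewrite mulf_eq0 negb_or => /andP[].
  have Hr : r_fun h0 fo Design2 x p = m1.
    rewrite /r_fun /obs_prY_X /= Hf1 Hf0 /fX_Y /prY -/p0 -/p -/m1.
    set den := (h0 * _ + _).
    have denp : 0 < den by rewrite /den; apply: addr_gt0; apply: mulr_gt0 => //; lra.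
    have denn : den != 0 by rewrite gt_eqF.
    field; nz.
  have Hr0 : r_fun h0 fo Design2 x 0 = 0 by rewrite /r_fun !mul0r.
  rewrite Hr /Gamma_AR Hr0 !mul0r !addr0 HP11 HP10 HP01 HP00 e_TY11 e_TY01 -/m1 -/e1 He -/a -/c.
  field; nz.
Qed.
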